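(* In the Setting, it cannot hold simultaneously that $r=\sqrt{K^2-\lambda_2V}$, $r+s=\sqrt{K-\lambda_1}$, $s=-\sqrt{K-\lambda_1}$, $g_2=0$, $g_1=f-c+1$, $f_1=c-1$ and $f_2=g-c$.
   Context: Setting: $\Gamma$ is a primitive strongly regular graph with parameters $(v,k,\lambda,\mu)$ (a $k$-regular graph on $v$ vertices, any two adjacent vertices having $\lambda$ and any two distinct non-adjacent vertices having $\mu$ common neighbours; primitive means $\Gamma$ and its complement are connected), with spectrum $k^1, r^f, s^g$ where $k>r>s$ and exponents are multiplicities. $C$ is a coclique in $\Gamma$ of size $c=\frac{vs}{s-k}$. A $K$-regular graph on $V$ vertices, neither complete nor edgeless, is a divisible design graph with parameters $(V,K,\lambda_1,\lambda_2;m,n)$ if its vertex set can be partitioned into $m$ canonical classes of size $n$ such that two distinct vertices in the same class have exactly $\lambda_1$ common neighbours and two vertices in different classes have exactly $\lambda_2$ common neighbours; it is proper unless $m=1$, $n=1$ or $\lambda_1=\lambda_2$. It is assumed that the subgraph $\Delta$ induced on $V(\Gamma)\setminus C$ is a proper divisible design graph with parameters $(V,K,\lambda_1,\lambda_2;m,n)$. Let $A$ be the adjacency matrix of $\Delta$, $W$ the space of vectors constant on each canonical class and $\mathbf{1}$ the all-ones vector. It is known that $A$ acts on $W^\perp$ with eigenvalues $\pm\sqrt{K-\lambda_1}$, whose multiplicities are denoted $f_1$ (for $+$) and $f_2$ (for $-$), with $f_1+f_2=m(n-1)$, and on $W\cap\mathbf{1}^\perp$ with eigenvalues $\pm\sqrt{K^2-\lambda_2V}$,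 with multiplicities $g_1$ (for $+$) and $g_2$ (for $-$), $g_1+g_2=m-1$. It is also known that the spectrum of $\Delta$ is $(k+s)^1, r^{f-c+1}, (r+s)^{c-1}, s^{g-c}$, with $c<g$. *)

(* Defs.v *)
From HB Require Import structures.
From mathcomp Require Import all_boot all_order all_algebra.
From mathcomp Require Import fingraph.
From mathcomp Require Import reals.
Set Implicit Arguments. Unset Strict Implicit. Unset Printing Implicit Defensive.
Import Order.TTheory GRing.Theory Num.Theory.
Local Open Scope ring_scope.

Section Graphs.
Variable U : finType.
Implicit Type e : rel U.

Definition simple_graph e := symmetric e /\ irreflexive e.

Definition nbhd e (x : U) : {set U} := [set y | e x y].
Definition common e (x y : U) : nat := #|[set z | e x z && e y z]|.

Definition regular e (k : nat) := forall x, #|nbhd e x| = k.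

Definition srg e (v k lam mu : nat) :=
  [/\ simple_graph e, #|U| = v, regular e k,
      (forall x y, e x y -> common e x y = lam) &
      (forall x y, x != y -> ~~ e x y -> common e x y = mu)].

Definition compl_rel e : rel U := fun x y => (x != y) && ~~ e x y.

Definition primitive e :=
  (forall x y, connect e x y) /\ (forall x y, connect (compl_rel e) x y).

Definition coclique e (C : {set U}) := forall x y, x \in C -> y \in C -> ~~ e x y.

Definition ddg e (P : {set {set U}}) (V K l1 l2 m n : nat) :=
  [/\ simple_graph e, #|U| = V, regular e K,
      (exists x y, e x y) &
      (exists x y, x != y /\ ~~ e x y) ] /\
  [/\ partition P [set: U], #|P| = m, (forall B, B \in P -> #|B| = n),
      (forall x y, x != y -> pblock P x = pblock P y -> common e x y = l1) &
      (forall x y, pblock P x != pblock P y -> common e x y = l2)].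

Definition proper_ddg e P V K l1 l2 m n :=
  ddg e P V K l1 l2 m n /\ [/\ m <> 1%N, n <> 1%N & l1 <> l2].

Definition adjmx (R : nzRingType) e : 'M[R]_#|U| :=
  \matrix_(i, j) (e (enum_val i) (enum_val j))%:R.

Definition mult (F : fieldType) (N : nat) (M : 'M[F]_N) (a : F) : nat :=
  \rank (eigenspace M a).

(* the matrix whose rows are the characteristic vectors of the blocks of P;
   its row space is W, the space of vectors constant on each class *)
Definition classmx (F : fieldType) (P : {set {set U}}) : 'M[F]_(#|P|, #|U|) :=
  \matrix_(i, j) ((enum_val j) \in (enum_val i : {set U}))%:R.

(* W^perp as a row space *)
Definition Wperp (F : fieldType) P : 'M[F]_#|U| := kermx (classmx F P)^T.
(* W ∩ 1^perp as a row space *)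
Definition W_one_perp (F : fieldType) P : 'M[F]_#|U| :=
  ((classmx F P) :&: kermx (const_mx 1 : 'cV[F]_#|U|))%MS.

Definition mult_on (F : fieldType) (N : nat) (M : 'M[F]_N) (S : 'M[F]_N) a :=
  \rank (eigenspace M a :&: S)%MS.

End Graphs.

(* Main.v *)
Require Import Defs.
From HB Require Import structures.
From mathcomp Require Import all_boot all_order all_algebra.
From mathcomp Require Import fingraph.
From mathcomp Require Import reals.
From mathcomp Require Import zify ring lra.
Import Order.TTheory GRing.Theory Num.Theory.
Local Open Scope ring_scope.

Lemma sum_ev (R : nzRingType) (T : finType) (p : pred T) :
  \sum_(j < #|T|) ((p (enum_val j) : nat)%:R : R) = (#|p|)%:R.
Proof.
rewrite -natr_sum; congr (_%:R).
rewrite (reindex (@enum_rank T)) /=; last by apply: onW_bij; exact: enum_rank_bij.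
rewrite -sum1_card [RHS]big_mkcond /=; apply: eq_bigr => x _.
by rewrite enum_rankK; rewrite unfold_in; case: (p x).
Qed.

Lemma adj_row (R : nzRingType) (T : finType) (e : rel T) k (i : 'I_#|T|) :
  regular e k -> \sum_j adjmx R e i j = k%:R.
Proof.
move=> Hreg; under eq_bigr do rewrite mxE.
rewrite (@sum_ev R T (e (enum_val i))) -(Hreg (enum_val i)).
by congr (_%:R); apply: eq_card => z; rewrite inE.
Qed.

Lemma adj_sq (R : nzRingType) (T : finType) (e : rel T) (i j : 'I_#|T|) :
  symmetric e ->
  (adjmx R e *m adjmx R e) i j = (common e (enum_val i) (enum_val j))%:R.
Proof.
move=> Hsym; rewrite mxE.
under eq_bigr do rewrite !mxE -natrM mulnb (Hsym _ (enum_val j)).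
rewrite (@sum_ev R T [pred z | e (enum_val i) z && e (enum_val j) z]).
by congr (_%:R); apply: eq_card => z; rewrite inE.
Qed.

Lemma srg_mx (F : fieldType) (T : finType) (e : rel T) v k lam mu :
  srg e v k lam mu ->
  adjmx F e *m adjmx F e =
    (k%:R)%:M + lam%:R *: adjmx F e + mu%:R *: (const_mx 1 - 1%:M - adjmx F e).
Proof.
case=> [[Hsym Hirr] _ Hreg Hl Hm].
apply/matrixP => i j; rewrite adj_sq // !mxE.
have [->|ij] := eqVneq i j.
  rewrite Hirr mulr0 addr0 subrr subr0 mulr0 addr0 mulr1n.
  rewrite -(Hreg (enum_val j)); congr (_%:R); apply: eq_card => z; by rewrite !inE andbb.
have vij : enum_val i != enum_val j by apply: contra ij => /eqP/enum_val_inj ->.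
rewrite mulr0n add0r subr0.
case E: (e (enum_val i) (enum_val j)).
  by rewrite (Hl _ _ E) mulr1 subrr mulr0 addr0.
by rewrite (Hm _ _ vij (negbT E)) mulr0 subr0 mulr1 add0r.
Qed.

Lemma srg_one (F : fieldType) (T : finType) (e : rel T) v k lam mu :
  srg e v k lam mu ->
  adjmx F e *m const_mx 1 = k%:R *: (const_mx 1 : 'cV[F]_#|T|).
Proof.
case=> [_ _ Hreg _ _]; apply/matrixP => i j; rewrite !mxE mulr1.
rewrite -(@adj_row F T e k i Hreg); apply: eq_bigr => l _; by rewrite !mxE mulr1.
Qed.

Lemma eig_quad (F : fieldType) N (M : 'M[F]_N) (k l m a : F) (u : 'rV[F]_N) :
 M *m M = k%:M + l *: M + m *: (const_mx 1 - 1%:M - M) ->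
 M *m const_mx 1 = k *: (const_mx 1 : 'cV[F]_N) ->
 u != 0 -> u *m M = a *: u -> a != k -> a ^+ 2 = k + l * a - m - m * a.
Proof.
move=> HM H1 u0 Hu ak.
have u1 : u *m (const_mx 1 : 'cV[F]_N) = 0.
  have E1 : u *m M *m (const_mx 1 : 'cV[F]_N) = a *: (u *m const_mx 1) by rewrite Hu scalemxAl.
  have E2 : u *m M *m (const_mx 1 : 'cV[F]_N) = k *: (u *m const_mx 1) by rewrite -mulmxA H1 scalemxAr.
  have : (a - k) *: (u *m (const_mx 1 : 'cV[F]_N)) = 0 by rewrite scalerBl -E1 -E2 subrr.
  by move/eqP; rewrite scaler_eq0 subr_eq0 (negbTE ak) /= => /eqP.
have uJ : u *m (const_mx 1 : 'M[F]_N) = 0.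
  have -> : (const_mx 1 : 'M[F]_N) = (const_mx 1 : 'cV[F]_N) *m (const_mx 1 : 'rV[F]_N).
    by apply/matrixP => i j; rewrite !mxE big_ord1 !mxE mulr1.
  by rewrite mulmxA u1 mul0mx.
have E : u *m (M *m M) = a ^+ 2 *: u by rewrite mulmxA Hu -scalemxAl Hu scalerA expr2.
have E' : u *m (M *m M) = (k + l * a - m - m * a) *: u.
  rewrite HM !mulmxDr -!scalemxAr !mulmxBr uJ mul_mx_scalar mulmx1 Hu.
  rewrite !scalerDl !scaleNr !scalerA sub0r !scalerBr scalerN !scalerA; by rewrite !addrA.
have : (a ^+ 2 - (k + l * a - m - m * a)) *: u = 0 by rewrite scalerBl -E -E' subrr.
by move/eqP; rewrite scaler_eq0 (negbTE u0) orbF subr_eq0 => /eqP.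
Qed.

Lemma one_quad (F : fieldType) N (M : 'M[F]_N) (k l m : F) (i : 'I_N) :
 M *m M = k%:M + l *: M + m *: (const_mx 1 - 1%:M - M) ->
 M *m const_mx 1 = k *: (const_mx 1 : 'cV[F]_N) ->
 k ^+ 2 = k + l * k + m * (N%:R - 1 - k).
Proof.
move=> HM H1.
set o := (const_mx 1 : 'cV[F]_N).
have o0 : o != 0 by apply/eqP => /matrixP /(_ i 0); rewrite !mxE => /eqP; rewrite oner_eq0.
have Jo : (const_mx 1 : 'M[F]_N) *m o = N%:R *: o.
  apply/matrixP => a b; rewrite !mxE (eq_bigr (fun _ => 1)); last by move=> j _; rewrite !mxE mulr1.
  by rewrite sumr_const card_ord mulr1.
have E : M *m M *m o = k ^+ 2 *: o by rewrite -mulmxA H1 -scalemxAr H1 scalerA expr2.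
have E' : M *m M *m o = (k + l * k + m * (N%:R - 1 - k)) *: o.
  rewrite HM !mulmxDl -!scalemxAl !mulmxBl Jo !mul_scalar_mx H1.
  by rewrite -/o -!scalerBl !scalerA -!scalerDl.
have : (k ^+ 2 - (k + l * k + m * (N%:R - 1 - k))) *: o = 0 by rewrite scalerBl -E -E' subrr.
by move/eqP; rewrite scaler_eq0 (negbTE o0) orbF subr_eq0 => /eqP.
Qed.

Lemma eigvec (F : fieldType) N (M : 'M[F]_N) a :
  (0 < mult M a)%N -> exists2 u : 'rV[F]_N, u != 0 & u *m M = a *: u.
Proof.
rewrite /mult lt0n mxrank_eq0 => /rowV0Pn [u Hu u0]; exists u => //; exact/eigenspaceP.
Qed.

Lemma no_t2 k lam mu K l2 V c v : (mu + 8 = k)%N -> (lam + 6 = k)%N -> (K + 2 = k)%N ->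
  (K*K = l2*V + 16)%N -> (c*k = 2*V)%N -> (v = V + c)%N ->
  (k*k + mu*(1+k) = k + lam*k + mu*v)%N -> False.
Proof.
move=> Hmu Hl HK H1 H2 Hv H3.
have eK : K = (mu + 6)%N by lia.
have el : lam = (mu + 2)%N by lia.
subst k K lam v.
have h3 : (mu*mu + 14*mu + 40 = mu*(V+c))%N by nia.
have h2 : (2*(V+c) = c*(mu+10))%N by nia.
have h5 : (mu*c*(mu+10) = (2*mu+8)*(mu+10))%N by nia.
have h4 : (mu*c = 2*mu + 8)%N.
  by apply/eqP; rewrite -(eqn_pmul2r (_ : 0 < mu+10)%N) ?h5 //; lia.
have mub : (mu <= 8)%N.
  case: (leqP c 2) => hc.
    have : (mu * c <= mu * 2)%N by rewrite leq_mul2l hc orbT.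
    lia.
  have : (mu * 3 <= mu * c)%N by rewrite leq_mul2l hc orbT.
  lia.
clear h3 h2 h5 HK Hl H3.
do 9 (case: mu mub H1 H2 h4 => [|mu] mub H1 H2 h4; first by nia).
by [].
Qed.

Lemma no_t1 (T : finType) (e : rel T) v k lam mu x y :
  srg e v k lam mu -> (lam + 1 = k)%N -> (mu + 2 = k)%N -> (3 <= k)%N ->
  x != y -> ~~ e x y -> False.
Proof.
case=> [[Hsym Hirr] _ Hreg Hl Hm] H1 H2 H3 xy nxy.
have : (0 < common e x y)%N by rewrite (Hm _ _ xy nxy); lia.
rewrite card_gt0 => /set0Pn [z]; rewrite inE => /andP [exz eyz].
have ezx : e z x by rewrite Hsym.
set S := [set w | e z w && e x w].
have cS : #|S| = lam by rewrite -(Hl _ _ ezx).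
have xS : x \notin S by rewrite inE Hirr andbF.
have yS : y \notin S by rewrite inE (negbTE nxy) andbF.
have sub : x |: (y |: S) \subset nbhd e z.
  apply/subsetP => w; rewrite !inE => /orP [/eqP ->|/orP [/eqP ->|/andP [//]]] //.
  by rewrite Hsym.
have := subset_leq_card sub.
rewrite Hreg cardsU1 cardsU1 in_setU1 negb_or xy xS yS cS /=.
lia.
Qed.

Section Sub.
Variables (T : finType) (e : rel T) (C : {set T}).
Let D := fun x y : {x : T | x \notin C} => e (val x) (val y).

Lemma card_nbD (y : {x : T | x \notin C}) :
  #|nbhd D y| = #|[set x in ~: C | e (val y) x]|.
Proof.
rewrite -(card_imset _ val_inj); apply: eq_card => x.
apply/imsetP/idP => [[w]|].
  by rewrite !inE => Hw ->; rewrite (valP w); exact: Hw.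
rewrite !inE => /andP [Hx He]; exists (exist _ x Hx) => //; by rewrite inE.
Qed.

Lemma common_le (a b : {x : T | x \notin C}) :
  (common D a b <= common e (val a) (val b))%N.
Proof.
rewrite /common -(card_imset _ val_inj); apply: subset_leq_card.
by apply/subsetP => x /imsetP [w]; rewrite !inE => Hw ->.
Qed.
End Sub.

Lemma sum_ind (T : finType) (A : {set T}) (p : pred T) :
  (\sum_(z in A) (p z : nat))%N = #|[set z in A | p z]|.
Proof.
rewrite -sum1_card big_mkcond [RHS]big_mkcond /=; apply: eq_bigr => z _.
by rewrite !inE; case: (z \in A); case: (p z).
Qed.

Lemma dcount (T : finType) (e : rel T) (C : {set T}) k K :
  symmetric e -> regular e k -> coclique e C ->
  (forall z, z \notin C -> #|[set x in ~: C | e z x]| = K) ->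
  (#|C| * k + #|~: C| * K = #|~: C| * k)%N.
Proof.
move=> Hsym Hreg Hco HK.
have E1 : (\sum_(x in C) \sum_(z in ~: C) (e x z : nat))%N = (#|C| * k)%N.
  rewrite -sum_nat_const; apply: eq_bigr => x xC.
  rewrite sum_ind -(Hreg x); apply: eq_card => z; rewrite !inE.
  case E: (e x z); rewrite ?andbF ?andbT //.
  by apply/negP => zC; move: (Hco _ _ xC zC); rewrite E.
rewrite -E1 exchange_big /= -[(#|~: C| * K)%N]sum_nat_const -[(#|~: C| * k)%N]sum_nat_const -big_split /=.
apply: eq_bigr => z; rewrite inE => zC.
rewrite (@sum_ind T C (fun x => e x z)) -(HK z zC) -(Hreg z).
rewrite -(cardsID C (nbhd e z)); congr (_ + _)%N; apply: eq_card => x; rewrite !inE.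
  by rewrite Hsym andbC.
by rewrite andbC.
Qed.

Theorem mainTheorem5 (R : realType) (T : finType) (e : rel T)
    (v k lam mu : nat) (r s : R) (f g : nat) (C : {set T})
    (P : {set {set {x : T | x \notin C}}})
    (V K l1 l2 m n : nat) :
  srg e v k lam mu ->
  primitive e ->
  mult (adjmx R e) k%:R = 1%N ->
  mult (adjmx R e) r = f ->
  mult (adjmx R e) s = g ->
  (1 + f + g)%N = v ->
  r < k%:R -> s < r ->
  coclique e C ->
  (#|C|%:R : R) = v%:R * s / (s - k%:R) ->
  let Delta := fun x y : {x : T | x \notin C} => e (val x) (val y) in
  let c := #|C| in
  proper_ddg Delta P V K l1 l2 m n ->
  let A := adjmx R Delta in
  let f1 := mult_on A (Wperp R P) (Num.sqrt (K%:R - l1%:R)) in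
  let f2 := mult_on A (Wperp R P) (- Num.sqrt (K%:R - l1%:R)) in
  let g1 := mult_on A (W_one_perp R P) (Num.sqrt (K%:R ^+ 2 - l2%:R * V%:R)) in
  let g2 := mult_on A (W_one_perp R P) (- Num.sqrt (K%:R ^+ 2 - l2%:R * V%:R)) in
  (* known facts recalled in the setting *)
  (f1 + f2 = m * (n - 1))%N ->
  (g1 + g2 = m - 1)%N ->
  mult A (k%:R + s) = 1%N ->
  (mult A r + c = f + 1)%N ->
  (mult A (r + s) + 1 = c)%N ->
  (mult A s + c = g)%N ->
  (c < g)%N ->
  ~ (r = Num.sqrt (K%:R ^+ 2 - l2%:R * V%:R) /\
     r + s = Num.sqrt (K%:R - l1%:R) /\
     s = - Num.sqrt (K%:R - l1%:R) /\
     g2 = 0%N /\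
     (g1%:R : R) = f%:R - c%:R + 1 /\
     (f1%:R : R) = c%:R - 1 /\
     (f2%:R : R) = g%:R - c%:R).

Proof.
move=> Hsrg Hprim Hk Hr Hs Hv rk sr Hco Hc Delta c Hddg A f1 f2 g1 g2
  Hf12 Hg12 HmK HmR HmRS HmS Hcg [HrE [HrsE [HsE [Hg2 [Hg1 [Hf1 Hf2]]]]]].
have Hsrg' := Hsrg.
case: Hsrg' => [[Hsym Hirr] HTv Hreg Hlam Hmu].
case: Hddg => [[[[DSym DIrr] HTV Kreg [x0 [y0 Exy]] [x1 [y1 [xy1 nxy1]]]] [Hpart HPm HPn Hl1 Hl2]] [m1 n1 l12]].
set t := Num.sqrt (K%:R - l1%:R) in HrsE HsE.
have Hrt : r = 2 * t by lra.
have t0 : 0 < t by lra.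
have tsq : t ^+ 2 = K%:R - l1%:R.
  have : 0 < K%:R - l1%:R :> R by rewrite -sqrtr_gt0.
  by move=> /ltW /sqr_sqrtr.
have rsq : r ^+ 2 = K%:R ^+ 2 - l2%:R * V%:R.
  have : 0 < K%:R ^+ 2 - l2%:R * V%:R :> R by rewrite -sqrtr_gt0 -HrE; lra.
  by move=> /ltW /sqr_sqrtr; rewrite -HrE.
have Hcov : cover P = [set: _] by move: Hpart => /and3P [/eqP -> _ _].
have x0P : pblock P x0 \in P by apply: pblock_mem; rewrite Hcov inE.
have m2 : (2 <= m)%N.
  have : (0 < #|P|)%N by apply/card_gt0P; exists (pblock P x0).
  rewrite HPm; clear - m1; lia.
have g1pos : (1 <= g1)%N by move: Hg12; rewrite Hg2 addn0 => ->; clear - m2; lia.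
have multr : (1 <= mult A r)%N.
  apply: leq_trans g1pos _.
  rewrite /g1 /mult_on /mult -HrE; apply: mxrankS; exact: capmxSl.
have v0 : (0 < v)%N by rewrite -HTv; apply/card_gt0P; exists (val x0).
have skne : s - k%:R != 0 by apply/eqP => E; clear - sr rk E; lra.
have Hcs : c%:R * (s - k%:R) = v%:R * s by rewrite /c Hc mulfVK.
have c0 : (0 < c)%N.
  rewrite lt0n; apply/eqP => c0; move: Hcs; rewrite c0 mul0r => /esym/eqP.
  rewrite mulf_eq0 pnatr_eq0 (negbTE (lt0n_neq0 v0)) /= => /eqP s0; clear - s0 sr HsE HrsE t0; lra.
have f0 : (0 < f)%N by clear - HmR multr c0; lia.
have g0 : (0 < g)%N by clear - Hcg; lia.
have Pr : (0 < mult (adjmx R e) r)%N by rewrite Hr.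
have [u u0 Hu] := @eigvec R _ (adjmx R e) r Pr.
have Ps : (0 < mult (adjmx R e) s)%N by rewrite Hs.
have [w w0 Hw] := @eigvec R _ (adjmx R e) s Ps.
have HM := @srg_mx R _ _ _ _ _ _ Hsrg.
have H1 := @srg_one R _ _ _ _ _ _ Hsrg.
have rk' : r != k%:R by apply/eqP => E; clear - E rk; lra.
have Qr := @eig_quad _ _ _ _ _ _ _ _ HM H1 u0 Hu rk'.
have sk' : s != k%:R by apply/eqP => E; clear - E rk sr; lra.
have Qs := @eig_quad _ _ _ _ _ _ _ _ HM H1 w0 Hw sk'.
have Elm : lam%:R - mu%:R = t.
  have E : (r - s) * (r + s - (lam%:R - mu%:R)) = 0.
    have -> : (r - s) * (r + s - (lam%:R - mu%:R)) =
      (r ^+ 2 - (k%:R + lam%:R * r - mu%:R - mu%:R * r)) -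
      (s ^+ 2 - (k%:R + lam%:R * s - mu%:R - mu%:R * s)) by ring.
    by rewrite {1}Qr {1}Qs !subrr.
  move/eqP: E; rewrite mulf_eq0 => /orP [/eqP E|/eqP E]; clear - E sr HrsE; lra.
have Ekm : k%:R - mu%:R = 2 * t ^+ 2.
  rewrite (_ : k%:R - mu%:R = s ^+ 2 - (lam%:R - mu%:R) * s); last by rewrite Qs; ring.
  by rewrite Elm HsE; ring.
have HV : #|~: C| = V by rewrite -HTV card_sig; apply: eq_card => z; rewrite !inE.
have HvVc : (#|C| + V = v)%N by rewrite -HV -HTv cardsC.
have HK : forall z, z \notin C -> #|[set x in ~: C | e z x]| = K.
  move=> z zC; rewrite -(Kreg (exist _ z zC)); symmetry; exact: card_nbD.
have DC := @dcount _ _ _ _ _ Hsym Hreg Hco HK.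
rewrite HV in DC.
have DCr : c%:R * k%:R + V%:R * K%:R = V%:R * k%:R :> R.
  by rewrite -!natrM -natrD DC.
have Hvr : v%:R = c%:R + V%:R :> R by rewrite -natrD HvVc.
have V0 : (0 < V)%N by rewrite -HTV; apply/card_gt0P; exists x0.
have EK : K%:R = k%:R - t.
  have E : V%:R * (K%:R - (k%:R - t)) = 0.
    have -> : V%:R * (K%:R - (k%:R - t)) =
      (c%:R * k%:R + V%:R * K%:R - V%:R * k%:R) + (c%:R * (s - k%:R) - v%:R * s)
      by rewrite HsE Hvr; ring.
    by rewrite DCr Hcs !subrr addr0.
  move/eqP: E; rewrite mulf_eq0 pnatr_eq0 (negbTE (lt0n_neq0 V0)) /= => /eqP E; clear - E; lra.
have Eck : c%:R * k%:R = V%:R * t.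
  move: Hcs; rewrite HsE Hvr => E; clear - E; nra.
have mul : (mu < lam)%N by rewrite -(ltr_nat R); clear - Elm t0; lra.
set d := (lam - mu)%N.
have Ed : t = d%:R by rewrite /d natrB ?(ltnW mul) //; clear - Elm; lra.
have trP : trivIset P by move: Hpart => /and3P [].
set B := pblock P x0.
have x0B : x0 \in B by rewrite mem_pblock Hcov inE.
have n2 : (1 < #|B|)%N.
  have := HPn B x0P; have : (0 < #|B|)%N by apply/card_gt0P; exists x0.
  move=> h1 h2; rewrite h2 in h1 *; clear - n1 h1; lia.
have [a [b [aB bB ab]]] := card_gt1P n2.
have pab : pblock P a = pblock P b by rewrite (def_pblock trP x0P aB) (def_pblock trP x0P bB).
have Hab : (common Delta a b <= common e (val a) (val b))%N := @common_le T e C a b.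
rewrite (Hl1 _ _ ab pab) in Hab.
have vab : val a != val b by apply: contra ab => /eqP/val_inj ->.
have l1lam : (l1 <= lam)%N.
  case E: (e (val a) (val b)); first by rewrite (Hlam _ _ E) in Hab.
  rewrite (Hmu _ _ vab (negbT E)) in Hab; clear - Hab mul; lia.
have l1lamr : l1%:R <= lam%:R :> R by rewrite ler_nat.
have t2 : t <= 2.
  have h : t ^+ 2 <= 2 * t by clear - l1lamr tsq EK Ekm Elm; lra.
  by move: h; rewrite expr2 ler_pM2r.
have d12 : (d == 1)%N || (d == 2)%N.
  have : (0 < d)%N by rewrite -(ltr_nat R) -Ed.
  have : (d <= 2)%N by rewrite -(ler_nat R) -Ed.
  clear; lia.
have [|i0] := posnP #|T|; first by move=> T0; move: v0; rewrite -HTv T0.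
have Q1 := @one_quad _ _ _ _ _ _ (Ordinal i0) HM H1.
rewrite HTv in Q1.
case/orP: d12 => /eqP d1; last rename d1 into d2.
-
  rewrite d1 in Ed.
  have hl : (lam + 1 = k)%N.
    apply/eqP; rewrite -(eqr_nat R) natrD; apply/eqP.
    clear - Ed Ekm Elm; rewrite Ed in Ekm Elm; lra.
  have hm : (mu + 2 = k)%N.
    apply/eqP; rewrite -(eqr_nat R) natrD; apply/eqP.
    clear - Ed Ekm; rewrite Ed in Ekm; lra.
  have hk : (3 <= k)%N by rewrite -(ltr_nat R); clear - Ed Hrt rk; lra.
  have vxy : val x1 != val y1 by apply: contra xy1 => /eqP/val_inj ->.
  exact: (@no_t1 T e v k lam mu _ _ Hsrg hl hm hk vxy nxy1).
-
  rewrite d2 in Ed.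
  apply: (@no_t2 k lam mu K l2 V c v).
  + apply/eqP; rewrite -(eqr_nat R) natrD; apply/eqP.
    clear - Ed Ekm; rewrite Ed in Ekm; lra.
  + apply/eqP; rewrite -(eqr_nat R) natrD; apply/eqP.
    clear - Ed Ekm Elm; rewrite Ed in Ekm Elm; lra.
  + apply/eqP; rewrite -(eqr_nat R) natrD; apply/eqP.
    clear - Ed EK; rewrite Ed in EK; lra.
  + apply/eqP; rewrite -(eqr_nat R) natrD !natrM; apply/eqP.
    clear - Ed rsq Hrt; rewrite Hrt Ed in rsq; move: rsq; rewrite !expr2 => rsq; lra.
  + apply/eqP; rewrite -(eqr_nat R) !natrM; apply/eqP.
    clear - Ed Eck; rewrite Ed in Eck; lra.
  + by rewrite -HvVc addnC.
  + apply/eqP; rewrite -(eqr_nat R) !natrD !natrM; apply/eqP.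
    clear - Q1; move: Q1; rewrite expr2 => Q1; lra.
Qed.
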